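(* Let $f:\mathbb{R}\to\mathbb{C}$ be Lebesgue measurable and suppose there exist constants $a,c\in\mathbb{C}$ and $b\in\mathbb{R}$ such that $f(x)=ce^{ax}$ for almost every $x>b$, or alternatively $f(x)=ce^{ax}$ for almost every $x<b$. Then $\mathcal G(f,\mathbb{R}^2)$ is linearly independent, unless $f(x)=ce^{ax}$ for almost every $x\in\mathbb{R}$.
   Context: For $\alpha,\beta\in\mathbb{R}$, $M_\alpha T_\beta f(x)=e^{2\pi i \alpha x}f(x-\beta)$, and $\mathcal G(f,\mathbb{R}^2)=\{M_\alpha T_\beta f:\alpha,\beta\in\mathbb{R}\}$. Measurable functions equal a.e. are identified; $\mathcal G(f,\mathbb{R}^2)$ is linearly independent if every finite linear combination $\sum c_{(\alpha,\beta)}M_\alpha T_\beta f$ over distinct pairs $(\alpha,\beta)$ with coefficients not all zero is not zero almost everywhere. *)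

(* Defs.v *)
From HB Require Import structures.
From mathcomp Require Import all_boot all_order all_algebra.
From mathcomp Require Import all_classical all_reals all_analysis.
From mathcomp Require Import complex.

Set Implicit Arguments.
Unset Strict Implicit.
Unset Printing Implicit Defensive.

Import Order.TTheory GRing.Theory Num.Theory.
Import numFieldNormedType.Exports.

Local Open Scope classical_set_scope.
Local Open Scope ring_scope.

(* The measurable space of Lebesgue-measurable subsets of R
   (the Caratheodory/completed sigma-algebra of the Lebesgue measure). *)
Notation lebesgueR R :=
  (caratheodory_type (R:=R)
     (T:=lebesgue_stieltjes_measure_ocitv_type__canonical__measurable_structure_SemiRingOfSets R)
     (wlength (R:=R) idfun)^*%mu).

Definition expC {R : realType} (z : R[i]) : R[i] :=
  Complex (expR (complex.Re z) * cos (complex.Im z))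
          (expR (complex.Re z) * sin (complex.Im z)).

Definition RtoC {R : realType} (x : R) : R[i] := Complex x 0.

Definition cLebesgue_measurable {R : realType} (f : R -> R[i]) : Prop :=
  measurable_fun (T := lebesgueR R) (U := R) setT (fun x => complex.Re (f x)) /\
  measurable_fun (T := lebesgueR R) (U := R) setT (fun x => complex.Im (f x)).

Definition MT {R : realType} (al be : R) (f : R -> R[i]) (x : R) : R[i] :=
  expC (Complex 0 (2 * pi * al * x)) * f (x - be).

(* Linear independence of G(f, R^2) = { M_al T_be f : al, be in R },
   functions equal a.e. being identified: every finite linear combination over
   distinct pairs (al, be), with coefficients not all zero, is not a.e. zero. *)
Definition gabor_lin_indep {R : realType} (f : R -> R[i]) : Prop :=
  forall (s : seq (R * R)) (c : R * R -> R[i]),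
    uniq s -> has (fun p => c p != 0) s ->
    ~ (\forall x \ae (@lebesgue_measure R),
          \sum_(p <- s) c p * MT p.1 p.2 f x = 0).

(* Main.v *)
Require Import Defs.
From HB Require Import structures.
From mathcomp Require Import all_boot all_order all_algebra.
From mathcomp Require Import all_classical all_reals all_analysis.
From mathcomp Require Import complex.
From mathcomp Require Import ring lra measurable_realfun.

Import Order.TTheory GRing.Theory Num.Theory.
Local Open Scope classical_set_scope.
Local Open Scope ring_scope.

Section P1.
Variable R : realType.
Local Notation mu := (@lebesgue_measure R).

Lemma cmul (a b c d : R) : Complex a b * Complex c d = Complex (a*c - b*d) (a*d + b*c) :> R[i].
Proof. by []. Qed.

Lemma expCD (z w : R[i]) : expC (z + w) = expC z * expC w.
Proof.
case: z => u v; case: w => u' v'; rewrite /expC /=.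
rewrite expRD cosD sinD.
by rewrite cmul; congr Complex; ring.
Qed.

Lemma expC0 : expC (0 : R[i]) = 1.
Proof.
rewrite /expC (_ : complex.Re (0:R[i]) = 0) // (_ : complex.Im (0:R[i]) = 0) //.
by rewrite expR0 cos0 sin0 mul1r mulr0.
Qed.

Lemma expC_neq0 (z : R[i]) : expC z != 0.
Proof.
case: z => u v; rewrite /expC /=; apply/negP => /eqP.
rewrite (_ : (0:R[i]) = Complex 0 0) // => -[h1 h2].
have e0 : expR u != 0 by rewrite gt_eqF // expR_gt0.
move: h1 h2 => /eqP; rewrite mulf_eq0 (negbTE e0) /= => /eqP c0.
move=> /eqP; rewrite mulf_eq0 (negbTE e0) /= => /eqP s0.
by have := cos2Dsin2 v; rewrite c0 s0 expr0n /= addr0 => /eqP; rewrite eq_sym oner_eq0.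
Qed.

Lemma neg_shift (t : R) (N : set R) :
  mu.-negligible N -> mu.-negligible [set x | N (x + t)].
Proof.
move=> [A [mA A0 NA]].
have mf : measurable_fun [set: measurableTypeR R] (fun x : R => x + t).
  exact: (measurable_funD (@measurable_id _ _ setT) (measurable_cst t)).
exists ((fun x : R => x + t) @^-1` A); split.
- by rewrite -[X in measurable X]setTI; exact: mf.
- have -> : mu ((fun x : R => x + t) @^-1` A) =
      pushforward mu (fun x : R => x + t : measurableTypeR R) A by [].
  rewrite -A0; apply/esym/lebesgue_measure_unique => //= _ [[a b]] _ <-.
  rewrite /pushforward.
  have -> : (fun x : R => x + t) @^-1` `]a, b]%classic = `]a - t, b - t]%classic.
    by apply/seteqP; split => x /=; rewrite !in_itv /= ltrBlDr lerBrDr.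
  rewrite !lebesgue_measure_itv /= !lte_fin ltrD2r.
  by case: ifP => // _; rewrite -!EFinD; congr (_%:E); ring.
- by move=> x /= /NA.
Qed.

Lemma neg_opp (N : set R) :
  mu.-negligible N -> mu.-negligible [set x | N (- x)].
Proof.
move=> [A [mA A0 NA]].
exists ((-%R : R -> measurableTypeR R) @^-1` A); split.
- have mf : measurable_fun [set: measurableTypeR R] (-%R : R -> R).
    exact: (measurable_funN (@measurable_id _ _ setT)).
  by rewrite -[X in measurable X]setTI; exact: mf.
- by have := lebesgue_measureN mA; rewrite A0.
- by move=> x /= /NA.
Qed.

End P1.

Section P2.
Variable R : realType.
Local Notation mu := (@lebesgue_measure R).

Lemma aeE (P : R -> Prop) :
  (\forall x \ae mu, P x) <-> mu.-negligible [set x | ~ P x].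
Proof. by []. Qed.

Lemma ae_shift (t : R) (P : R -> Prop) :
  (\forall x \ae mu, P x) -> \forall x \ae mu, P (x + t).
Proof. by move/aeE/(@neg_shift R t) => h; apply/aeE. Qed.

Lemma ae_opp (P : R -> Prop) :
  (\forall x \ae mu, P x) -> \forall x \ae mu, P (- x).
Proof. by move/aeE/(@neg_opp R) => h; apply/aeE. Qed.

Lemma ae_seq (T : eqType) (s : seq T) (Q : T -> R -> Prop) :
  (forall p, p \in s -> \forall x \ae mu, Q p x) ->
  \forall x \ae mu, forall p, p \in s -> Q p x.
Proof.
elim: s => [|q s IH] H.
  by apply: aeW => x p.
have h1 := H q (mem_head _ _).
have h2 : \forall x \ae mu, forall p, p \in s -> Q p x.
  by apply: IH => p ps; apply: H; rewrite in_cons ps orbT.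
move/aeE: h1 => h1; move/aeE: h2 => h2; apply/aeE.
apply: negligibleS (negligibleU h1 h2) => x /= hx.
case: (pselect (Q q x)) => [Qq|nQ]; [right|by left].
move=> hs; apply: hx => p; rewrite in_cons => /orP [/eqP -> //|]; exact: hs.
Qed.

Lemma ae_nat (Q : nat -> R -> Prop) :
  (forall n, \forall x \ae mu, Q n x) -> \forall x \ae mu, forall n, Q n x.
Proof.
move=> H; apply/aeE.
apply: (@negligibleS _ _ _ mu (\bigcup_n [set x | ~ Q n x])).
  move=> x /= hx; apply: contrapT => hc; apply: hx => n.
  by apply: contrapT => hn; apply: hc; exists n.
apply: (@negligible_bigcup _ _ R mu) => n; by move/aeE: (H n).
Qed.

Lemma not_neg_gt (t : R) : ~ mu.-negligible [set x | t < x].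
Proof.
move=> h.
have : mu.-negligible `]t, t+1[%classic.
  by apply: negligibleS h => x /=; rewrite in_itv /= => /andP[].
move/negligibleP => /(_ (measurable_itv _)).
move=> h0; have h1 : (@lebesgue_measure R `]t, t+1[%classic = 0%E) := h0.
move: h1; rewrite lebesgue_measure_itv /= lte_fin ltrDl ltr01 => /eqP.
by rewrite -EFinB eqe addrAC subrr add0r oner_eq0.
Qed.

Lemma not_neg_ae (S Z : set R) :
  ~ mu.-negligible S -> (\forall x \ae mu, S x -> Z x) -> ~ mu.-negligible Z.
Proof.
move=> nS /aeE hN nZ; apply: nS.
apply: (@negligibleS _ _ _ mu (Z `|` [set x | ~ (S x -> Z x)])).
  move=> x Sx; case: (pselect (Z x)) => [Zx|nZx]; [by left|right => /=].
  by move=> /(_ Sx).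
exact: negligibleU.
Qed.

End P2.

Section P3a.
Variable R : realType.
Local Notation mu := (@lebesgue_measure R).

Lemma isolated_neg (Z : set R) :
  (forall z, Z z -> exists e, 0 < e /\ forall y, z < y < z + e -> ~ Z y) ->
  mu.-negligible Z.
Proof.
move=> H.
have H' : forall z, exists q : rat, Z z ->
    z < ratr q /\ forall y, z < y -> y <= ratr q -> ~ Z y.
  move=> z; case: (pselect (Z z)) => [Zz|nZ]; last by exists 0%Q.
  have [e [e0 he]] := H z Zz.
  have ze : z < z + e by rewrite ltrDl.
  have [q] := rat_in_itvoo ze.
  rewrite in_itv /= => /andP [zq qe]; exists q => _; split => // y zy yq.
  by apply: he; rewrite zy /=; exact: le_lt_trans yq qe.
have [q hq] := choice H'.
have cZ : countable Z.
  apply/countable_injP; exists (fun z => pickle (q z)).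
  move=> z1 z2; rewrite !inE => Z1 Z2 /(pcan_inj pickleK) eq12.
  have [h1 h1'] := hq z1 Z1; have [h2 h2'] := hq z2 Z2.
  case: (ltgtP z1 z2) => // [lt12|lt21].
  - by exfalso; apply: (h1' z2) => //; rewrite eq12 ltW.
  - by exfalso; apply: (h2' z1) => //; rewrite -eq12 ltW.
apply/negligibleP.
  by apply: countable_measurable => // t; exact: measurable_set1.
exact: countable_lebesgue_measure0.
Qed.

Lemma vandermonde_zero (s : seq R[i]) (V : R[i] -> R[i]) (l0 : R[i]) :
  uniq s -> l0 \in s -> (forall j, \sum_(l <- s) V l * l ^+ j = 0) -> V l0 = 0.
Proof.
move=> us l0s H.
have Hq : forall q : {poly R[i]}, \sum_(l <- s) V l * q.[l] = 0.
  move=> q.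
  under eq_bigr do rewrite horner_coef big_distrr /=.
  rewrite exchange_big /= big1 // => i _.
  rewrite (eq_bigr (fun l => q`_i * (V l * l ^+ i))); last by move=> l _; rewrite mulrCA.
  by rewrite -big_distrr /= H mulr0.
pose q := \prod_(m <- rem l0 s) ('X - m%:P).
have := Hq q; rewrite (big_rem l0) //= big_seq big1 ?addr0; last first.
  move=> l ls; rewrite /q horner_prod.
  apply/eqP; rewrite mulf_eq0; apply/orP; right.
  rewrite prodf_seq_eq0; apply/hasP; exists l => //.
  by rewrite hornerXsubC subrr eqxx.
move/eqP; rewrite mulf_eq0 => /orP [/eqP //|].
rewrite /q horner_prod prodf_seq_eq0 => /hasP [m mrem].
rewrite hornerXsubC subr_eq0 => /eqP eq.
by move: mrem; rewrite -eq mem_rem_uniqF.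
Qed.

End P3a.

Set Implicit Arguments.
Unset Strict Implicit.
Unset Printing Implicit Defensive.
Import numFieldNormedType.Exports.

Section P3b.
Variable R : realType.

Lemma dlin (u x : R) : is_derive x 1 (fun y : R => u * y) u.
Proof.
have -> : (fun y : R => u * y) = u \*: id by apply/funext => y.
apply: (is_derive_eq (is_deriveZ u (is_derive_id x 1))).
by rewrite /GRing.scale /= mulr1.
Qed.

Lemma dcomp (f g : R -> R) (x a b : R) :
  is_derive (g x) 1 f a -> is_derive x 1 g b ->
  is_derive x 1 (fun y => f (g y)) (a * b).
Proof. move=> h1 h2; exact: (is_derive1_comp h1 h2). Qed.

Lemma dmul (f g : R -> R) (x a b : R) :
  is_derive x 1 f a -> is_derive x 1 g b ->
  is_derive x 1 (fun y => f y * g y) (f x * b + g x * a).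
Proof.
move=> h1 h2; have -> : (fun y => f y * g y) = f * g by apply/funext.
apply: (is_derive_eq (is_deriveM h1 h2)).
by [].
Qed.

Lemma dsub (f g : R -> R) (x a b : R) :
  is_derive x 1 f a -> is_derive x 1 g b ->
  is_derive x 1 (fun y => f y - g y) (a - b).
Proof.
move=> h1 h2; have -> : (fun y => f y - g y) = f - g by apply/funext.
exact: is_deriveB.
Qed.

Lemma dadd (f g : R -> R) (x a b : R) :
  is_derive x 1 f a -> is_derive x 1 g b ->
  is_derive x 1 (fun y => f y + g y) (a + b).
Proof.
move=> h1 h2; have -> : (fun y => f y + g y) = f + g by apply/funext.
exact: is_deriveD.
Qed.

Lemma dscal (f : R -> R) (k x a : R) :
  is_derive x 1 f a -> is_derive x 1 (fun y => k * f y) (k * a).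
Proof.
move=> h; have -> : (fun y => k * f y) = k \*: f by apply/funext.
exact: is_deriveZ.
Qed.

Lemma dexp (u x : R) : is_derive x 1 (fun y => expR (u * y)) (expR (u * x) * u).
Proof. exact: dcomp (is_derive_expR (u * x)) (dlin u x). Qed.

Lemma dcos (v x : R) : is_derive x 1 (fun y => cos (v * y)) (- sin (v * x) * v).
Proof. exact: dcomp (is_derive_cos (v * x)) (dlin v x). Qed.

Lemma dsin (v x : R) : is_derive x 1 (fun y => sin (v * y)) (cos (v * x) * v).
Proof. exact: dcomp (is_derive_sin (v * x)) (dlin v x). Qed.

Lemma dterm (C l : R[i]) (x : R) :
  is_derive x 1 (fun y => complex.Re (C * expC (l * RtoC y)))
    (complex.Re (C * l * expC (l * RtoC x))).
Proof.
case: C => p q; case: l => u v.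
have -> : (fun y => complex.Re (Complex p q * expC (Complex u v * RtoC y))) =
  (fun y => p * (expR (u * y) * cos (v * y)) - q * (expR (u * y) * sin (v * y))).
  apply/funext => y; rewrite /expC /RtoC /= !mulr0 subr0 add0r.
  by [].
have h := (dsub (dscal p (dmul (dexp u x) (dcos v x)))
                            (dscal q (dmul (dexp u x) (dsin v x)))).

eapply is_derive_eq; [exact: h|].
rewrite /expC /RtoC /= !mulr0 subr0 add0r.
ring.
Qed.

End P3b.

Section P3c.
Variable R : realType.
Local Notation mu := (@lebesgue_measure R).

Definition acc (z : R) (g : R -> R) :=
  forall e, 0 < e -> exists y, z < y < z + e /\ g y = 0.

Lemma acc_deriv (g g' : R -> R) (z : R) :
  (forall x : R, is_derive x 1 g (g' x)) -> acc z g -> acc z g'.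
Proof.
move=> hd ha e e0.
have [y1 [/andP [zy1 y1e] g1]] := ha e e0.
have y1z : 0 < y1 - z by rewrite subr_gt0.
have [y2 [/andP [zy2 y2y1] g2]] := ha _ y1z.
have {}y2y1 : y2 < y1 by move: y2y1; rewrite addrC subrK.
have := @Rolle R g y2 y1 y2y1 (fun x _ => @ex_derive _ _ _ _ _ _ _ (hd x)).
case.
- apply: derivable_within_continuous => x _; exact: (@ex_derive _ _ _ _ _ _ _ (hd x)).
- by rewrite g1 g2.
move=> c; rewrite in_itv /= => /andP [y2c cy1] hc.
exists c; split; last first.
  by have := @derive_val _ _ _ _ _ _ _ hc; rewrite (@derive_val _ _ _ _ _ _ _ (hd c)).
by rewrite (lt_trans zy2 y2c) /= (lt_trans cy1 y1e).
Qed.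

Lemma acc_zero (g : R -> R) (z : R) : derivable g z 1 -> acc z g -> g z = 0.
Proof.
move=> dg ha; apply: contrapT => gz0.
have cg : {for z, continuous g}.
  by apply/differentiable_continuous/derivable1_diffP.
have gz : 0 < `|g z| by rewrite normr_gt0; apply/eqP.
move/cvgrPdist_lt: cg => /(_ _ gz); case/nbhs_normP => d d0 hd.
have [y [/andP [zy yd] gy]] := ha d d0.
have : `|g z - g y| < `|g z|.
  apply: (hd y); rewrite /ball_ /= ler0_norm ?subr_le0 ?ltW //.
  by rewrite opprB ltrBlDl.

by rewrite gy subr0 ltxx.
Qed.

End P3c.

Section P3d.
Variable R : realType.
Local Notation mu := (@lebesgue_measure R).

Definition Gs (s : seq R[i]) (v : R[i] -> R[i]) (j : nat) (y : R) : R :=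
  complex.Re (\sum_(l <- s) v l * l ^+ j * expC (l * RtoC y)).

Lemma ReD (a b : R[i]) : complex.Re (a + b) = complex.Re a + complex.Re b.
Proof. by case: a => ? ?; case: b => ? ?. Qed.

Lemma dGs s v j (x : R) : is_derive x 1 (Gs s v j) (Gs s v j.+1 x).
Proof.
rewrite /Gs; elim: s => [|l s IH].
  have -> : (fun y : R => complex.Re (\sum_(l <- [::]) v l * l ^+ j * expC (l * RtoC y)))
     = cst 0 by apply/funext => y; rewrite big_nil.
  by rewrite big_nil; exact: is_derive_cst.
have -> : (fun y : R => complex.Re (\sum_(l0 <- l :: s) v l0 * l0 ^+ j * expC (l0 * RtoC y)))
   = (fun y => complex.Re (v l * l ^+ j * expC (l * RtoC y)) +
        complex.Re (\sum_(l0 <- s) v l0 * l0 ^+ j * expC (l0 * RtoC y))).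
  by apply/funext => y; rewrite big_cons ReD.
apply: (is_derive_eq (dadd (dterm (v l * l ^+ j) l x) IH)).
by rewrite big_cons ReD exprSr !mulrA.
Qed.

Lemma sum_pull (s : seq R[i]) (w : R[i] -> R[i]) c j (y : R) :
  \sum_(l <- s) (c * w l) * l ^+ j * expC (l * RtoC y) =
  c * \sum_(l <- s) w l * l ^+ j * expC (l * RtoC y).
Proof. by rewrite big_distrr /=; apply: eq_bigr => l _; rewrite !mulrA. Qed.

Lemma expoly_zero (s : seq R[i]) (w : R[i] -> R[i]) :
  uniq s -> ~ mu.-negligible [set x | \sum_(l <- s) w l * expC (l * RtoC x) = 0] ->
  forall l, l \in s -> w l = 0.
Proof.
move=> us nZ l0 l0s.
set Z := [set x | \sum_(l <- s) w l * expC (l * RtoC x) = 0].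
have [z [Zz hz]] : exists z, Z z /\ forall e, 0 < e -> exists y, z < y < z + e /\ Z y.
  apply: contrapT => hn; apply: nZ; apply: isolated_neg => z Zz.
  apply: contrapT => hc; apply: hn; exists z; split => // e e0.
  apply: contrapT => hy; apply: hc; exists e; split => // y hy' Zy.
  by apply: hy; exists y; split.
have P0 : forall c j, Gs s (fun l => c * w l) j z = 0.
  move=> c j; apply: acc_zero; first exact: (@ex_derive _ _ _ _ _ _ _ (dGs _ _ _ z)).
  elim: j => [|j IH]; last exact: (acc_deriv (fun x => dGs _ _ _ x) IH).
  move=> e e0; have [y [hy Zy]] := hz e e0; exists y; split => //.
  rewrite /Gs sum_pull.
  rewrite (eq_bigr (fun l => w l * expC (l * RtoC y))); last by move=> l _; rewrite expr0 mulr1.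
  by rewrite Zy mulr0.
have Pj : forall j, \sum_(l <- s) w l * l ^+ j * expC (l * RtoC z) = 0.
  move=> j; have h1 := P0 1 j; have h2 := P0 (Complex 0 (-1)) j.
  move: h1 h2; rewrite /Gs !sum_pull mul1r.
  case: (\sum_(l <- s) _) => a b /= -> h2.
  by move: h2; rewrite mul0r sub0r mulN1r opprK => ->.
have hV : w l0 * expC (l0 * RtoC z) = 0.
  apply: (@vandermonde_zero R s (fun l => w l * expC (l * RtoC z)) l0 us l0s) => j.
  rewrite -[RHS](Pj j); apply: eq_bigr => l _; by rewrite mulrAC.
by move/eqP: hV; rewrite mulf_eq0 (negbTE (expC_neq0 _ _)) orbF => /eqP.
Qed.

End P3d.

Section P4.
Variable R : realType.

Lemma sum_only1 (r : seq R[i]) (l0 : R[i]) (G : R[i] -> R[i]) :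
  uniq r -> l0 \in r -> \sum_(l <- r) (if l0 == l then G l else 0) = G l0.
Proof.
move=> ur l0r; rewrite (big_rem l0) //= eqxx big_seq big1 ?addr0 // => l lr.
case: eqP => // e; move: lr; by rewrite -e mem_rem_uniqF.
Qed.

Lemma group_sum (I : eqType) (s : seq I) (lam : I -> R[i]) (F : I -> R[i]) (x : R) :
  \sum_(i <- s) F i * expC (lam i * RtoC x) =
  \sum_(l <- undup (map lam s)) (\sum_(i <- s | lam i == l) F i) * expC (l * RtoC x).
Proof.
symmetry.
rewrite (eq_bigr (fun l => \sum_(i <- s) (if lam i == l then F i * expC (l * RtoC x) else 0)));
  last by move=> l _; rewrite big_distrl /= big_mkcond /=; apply: eq_bigr => i _; case: ifP => //; rewrite mul0r.
rewrite exchange_big /= big_seq [RHS]big_seq; apply: eq_bigr => i is_.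
rewrite (sum_only1 (fun l => F i * expC (l * RtoC x))) ?undup_uniq //.
by rewrite mem_undup; apply: map_f.
Qed.

End P4.

Section P5a.
Variable R : realType.
Local Notation mu := (@lebesgue_measure R).

Lemma ae_mp (P Q : R -> Prop) :
  (\forall x \ae mu, P x) -> (forall x, P x -> Q x) -> \forall x \ae mu, Q x.
Proof.
move=> /aeE hP PQ; apply/aeE; apply: negligibleS hP => x /= nQ Px.
exact: nQ (PQ x Px).
Qed.

Lemma ae_and (P Q : R -> Prop) :
  (\forall x \ae mu, P x) -> (\forall x \ae mu, Q x) -> \forall x \ae mu, P x /\ Q x.
Proof.
move=> /aeE hP /aeE hQ; apply/aeE; apply: negligibleS (negligibleU hP hQ) => x /= nPQ.
case: (pselect (P x)) => Px; last by left.
by right => Qx; apply: nPQ.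
Qed.

Lemma max_exists (T : eqType) (s : seq T) (P : pred T) (g : T -> R) :
  has P s -> exists p0, [/\ p0 \in s, P p0 & forall q, q \in s -> P q -> g q <= g p0].
Proof.
elim: s => [//|a s IH] /=.
case Pa: (P a) => /=.
  case hs: (has P s).
    have [p0 [p0s Pp0 hp0]] := IH hs.
    case: (leP (g a) (g p0)) => ga.
      exists p0; split => //; first by rewrite in_cons p0s orbT.
      move=> q; rewrite in_cons => /orP [/eqP -> //|]; exact: hp0.
    exists a; split => //; first by rewrite mem_head.
    move=> q; rewrite in_cons => /orP [/eqP -> //|qs Pq].
    exact: le_trans (hp0 q qs Pq) (ltW ga).
  exists a; split => //; first by rewrite mem_head.
  move=> q; rewrite in_cons => /orP [/eqP -> //|qs Pq].
  by move/hasP: hs; case; exists q.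
move=> hs; have [p0 [p0s Pp0 hp0]] := IH hs.
exists p0; split => //; first by rewrite in_cons p0s orbT.
move=> q; rewrite in_cons => /orP [/eqP -> |]; last exact: hp0.
by rewrite Pa.
Qed.

Lemma gap_exists (T : eqType) (s : seq T) (g : T -> R) (be : R) :
  exists D, 0 < D /\ forall q, q \in s -> g q < be -> g q <= be - D.
Proof.
elim: s => [|a s [D [D0 hD]]].
  by exists 1; split => //; rewrite ltr01.
case: (ltP (g a) be) => ga.
  exists (Num.min D (be - g a)); split.
    by rewrite lt_min D0 subr_gt0.
  move=> q; rewrite in_cons => /orP [/eqP -> _|qs qb].
    by rewrite lerBrDr -lerBrDl ge_min lexx orbT.
  by apply: le_trans (hD q qs qb) _; rewrite lerB // ge_min lexx.
exists D; split => // q; rewrite in_cons => /orP [/eqP -> |]; last exact: hD.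
by move=> /(le_lt_trans ga); rewrite ltxx.
Qed.

Lemma archi_lt (x D : R) : 0 < D -> exists n : nat, x < n%:R * D.
Proof.
move=> D0; exists (Num.truncn (x / D)).+1.
by rewrite -ltr_pdivrMr // truncnS_gt.
Qed.

Lemma sum_abs_bound (T : eqType) (s : seq T) (g : T -> R) (p : T) :
  p \in s -> g p <= \sum_(q <- s) `|g q|.
Proof.
move=> ps; rewrite (big_rem p) //=; apply: le_trans (ler_norm _) _.
by rewrite lerDl sumr_ge0.
Qed.

Lemma RtoC_B (x y : R) : RtoC (x - y) = RtoC x - RtoC y.
Proof. by rewrite /RtoC; apply/eqP; rewrite /eq_op /= subr0 !eqxx. Qed.

Lemma imag_mul (t x : R) : Complex 0 t * RtoC x = Complex 0 (t * x).
Proof. by rewrite /RtoC cmul; congr Complex; ring. Qed.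

End P5a.

Section P5b.
Variable R : realType.
Local Notation mu := (@lebesgue_measure R).

Lemma arg_eq (a : R[i]) (al be x : R) :
  Complex 0 (2 * (pi * (al * x))) + a * RtoC (x - be) =
  - a * RtoC be + (a + Complex 0 (2 * (pi * al))) * RtoC x.
Proof. by case: a => u v; rewrite /RtoC !cmul /=; congr Complex; ring. Qed.

Theorem core (f : R -> R[i]) (a c : R[i]) (b : R) :
  (\forall x \ae mu, b < x -> f x = c * expC (a * RtoC x)) ->
  ~ (\forall x \ae mu, f x = c * expC (a * RtoC x)) ->
  gabor_lin_indep f.
Proof.
move=> H1 H2 s k us hs HL.
pose e : R -> R[i] := fun x => c * expC (a * RtoC x).
pose h : R -> R[i] := fun x => f x - e x.
pose M := \sum_(p <- s) `|p.2|.
have HM : forall p, p \in s -> p.2 <= M by move=> p ps; exact: sum_abs_bound.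
pose lam (p : R * R) : R[i] := a + Complex 0 (2 * pi * p.1).
pose F (p : R * R) : R[i] := k p * c * expC (- a * RtoC p.2).
have Eeq : forall x, \sum_(p <- s) k p * MT p.1 p.2 e x =
                     \sum_(p <- s) F p * expC (lam p * RtoC x).
  move=> x; apply: eq_bigr => p _; rewrite /MT /e /F /lam.
  rewrite -!mulrA; congr (_ * _); rewrite mulrCA; congr (_ * _).
  by rewrite -!expCD arg_eq.
have HLE : \forall x \ae mu, b + M < x ->
    \sum_(p <- s) k p * MT p.1 p.2 f x = \sum_(p <- s) k p * MT p.1 p.2 e x.
  have : \forall x \ae mu, forall p, p \in s -> b < x - p.2 -> f (x - p.2) = e (x - p.2).
    by apply: ae_seq => p _; exact: (@ae_shift R (- p.2) _ H1).
  move=> hae; apply: (ae_mp hae) => x hx xM.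
  rewrite big_seq [RHS]big_seq; apply: eq_bigr => p ps.
  rewrite /MT hx //; rewrite ltrBrDr; apply: le_lt_trans xM.
  by rewrite lerD2l; exact: HM.
have E0 : forall x, \sum_(p <- s) F p * expC (lam p * RtoC x) = 0.
  have G0 : forall l, l \in undup (map lam s) -> \sum_(p <- s | lam p == l) F p = 0.
    apply: expoly_zero; first exact: undup_uniq.
    apply: (@not_neg_ae R [set x | b + M < x]); first exact: not_neg_gt.
    apply: (ae_mp (ae_and HL HLE)) => x [hL hLE] xM.
    by rewrite /= -group_sum -Eeq -hLE.
  move=> x; rewrite group_sum big_seq big1 // => l hl; by rewrite G0 ?mul0r.
have HH : \forall x \ae mu,
    \sum_(p <- s) k p * (expC (Complex 0 (2 * pi * p.1 * x)) * h (x - p.2)) = 0.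
  apply: (ae_mp HL) => x hL.
  have : \sum_(p <- s) k p * MT p.1 p.2 f x =
    \sum_(p <- s) k p * (expC (Complex 0 (2 * pi * p.1 * x)) * h (x - p.2)) +
    \sum_(p <- s) k p * MT p.1 p.2 e x.
    rewrite (eq_bigr (fun p => k p * (expC (Complex 0 (2 * pi * p.1 * x)) * h (x - p.2)) + k p * MT p.1 p.2 e x)); first by rewrite big_split.
    by move=> p _; rewrite /MT /h /e; ring.
  by rewrite hL Eeq E0 addr0 => <-.
have Hh1 : \forall y \ae mu, b < y -> h y = 0.
  by apply: (ae_mp H1) => y hy yb; rewrite /h /e hy // subrr.
have Hh2 : ~ \forall y \ae mu, h y = 0.
  move=> hh; apply: H2; apply: (ae_mp hh) => y.
  by rewrite /h /e => /eqP; rewrite subr_eq0 => /eqP.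
have [p0 [p0s kp0 hp0]] := @max_exists R _ s (fun p => k p != 0) (fun p => p.2) hs.
set be := p0.2.
have [D [D0 hD]] := @gap_exists R _ s (fun p => p.2) be.
pose Pn (n : nat) := \forall y \ae mu, b - n%:R * D < y -> h y = 0.
have exn : exists n, ~ Pn n.
  apply: contrapT => hn; apply: Hh2.
  have hall : forall n, Pn n.
    by move=> n; apply: contrapT => hn'; apply: hn; exists n.
  apply: (ae_mp (@ae_nat R _ hall)) => y hy.
  have [n hn'] := archi_lt (b - y) D0.
  by apply: (hy n); lra.
pose P n := `[< ~ Pn n >].
have exP : exists n, P n by case: exn => n hn; exists n; apply/asboolP.
have [n Pn_ nmin] := ex_minnP exP.
case: n Pn_ nmin => [|m] Pn_ nmin.
  exfalso; move/asboolP: Pn_; apply; rewrite /Pn.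
  by apply: (ae_mp Hh1) => y hy; rewrite /= mul0r subr0.
have Pm : Pn m.
  apply: contrapT => hm; have := nmin m (asboolT hm); by rewrite ltnn.
move/asboolP: Pn_ => Hu2.
set u := b - m.+1%:R * D in Hu2.
have Hu1 : \forall y \ae mu, u + D < y -> h y = 0.
  apply: (ae_mp Pm) => y hy uy; apply: hy; move: uy; rewrite /u -natr1; lra.
pose T x := \sum_(q <- s | q.2 == be) k q * expC (Complex 0 (2 * pi * q.1 * x)).
have HT : \forall x \ae mu, u < x - be -> T x * h (x - be) = 0.
  have hq : \forall x \ae mu, forall q, q \in s -> u + D < x - q.2 -> h (x - q.2) = 0.
    by apply: ae_seq => q _; exact: (@ae_shift R (- q.2) _ Hu1).
  apply: (ae_mp (ae_and HH hq)) => x [hx hqx] ux.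
  rewrite -[RHS]hx (bigID (fun q => q.2 == be)) /=.
  rewrite [X in _ = _ + X]big_seq_cond [X in _ = _ + X]big1 ?addr0; last first.
    move=> q /andP [qs qbe].
    case: (eqVneq (k q) 0) => [-> | kq]; first by rewrite mul0r.
    rewrite hqx ?mulr0 //.
    have qlt : q.2 < be by rewrite lt_neqAle qbe hp0.
    have := hD q qs qlt; lra.
  rewrite /T big_distrl /=; apply: eq_bigr => q /eqP qbe; by rewrite qbe mulrA.
pose S := [set x | u < x - be /\ h (x - be) != 0].
have nS : ~ mu.-negligible S.
  move=> hS; apply: Hu2; apply/aeE.
  apply: negligibleS (@neg_shift R be _ hS) => y /= hy.
  rewrite /S /u /= addrK; case: (pselect (b - m.+1%:R * D < y)) => uy.
    by split => //; apply/eqP => hy0; apply: hy => _.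
  by exfalso; apply: hy => /uy.
pose s' := [seq q <- s | q.2 == be].
pose lamT (q : R * R) : R[i] := Complex 0 (2 * pi * q.1).
pose w (l : R[i]) := k (complex.Im l / (2 * pi), be).
have pi2 : 2 * pi != 0 :> R.
  by rewrite mulf_neq0 // ?pnatr_eq0 // gt_eqF // pi_gt0.
have wl : forall q, q.2 == be -> w (lamT q) = k q.
  move=> q /eqP qbe; rewrite /w /lamT /=.
  rewrite mulrC mulKf //; by case: q qbe => q1 q2 /= ->.
have ur : uniq (map lamT s').
  rewrite map_inj_in_uniq ?filter_uniq // => q1 q2.
  rewrite !mem_filter => /andP[/eqP e1 _] /andP[/eqP e2 _] [eq1].
  case: q1 q2 e1 e2 eq1 => x1 y1 [x2 y2] /= -> ->.
  by move/(mulfI pi2) ->.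
have Tx : forall x, T x = \sum_(l <- map lamT s') w l * expC (l * RtoC x).
  move=> x; rewrite /T big_map /s' big_filter.
  by apply: eq_bigr => q qs; rewrite wl // /lamT imag_mul.
have nZ : ~ mu.-negligible [set x | \sum_(l <- map lamT s') w l * expC (l * RtoC x) = 0].
  apply: (@not_neg_ae R S _ nS); apply: (ae_mp HT) => x hx [ux hx0]; rewrite /= -Tx.
  by move/eqP: (hx ux); rewrite mulf_eq0 (negbTE hx0) orbF => /eqP.
have p0s' : p0 \in s' by rewrite mem_filter eqxx p0s.
have := expoly_zero ur nZ (map_f lamT p0s'); rewrite wl ?eqxx // => /eqP.
by rewrite (negbTE kp0).
Qed.

End P5b.

Lemma RtoC_N (R : realType) (x : R) : RtoC (- x) = - RtoC x.
Proof. by rewrite /RtoC; apply/eqP; rewrite /eq_op /= oppr0 !eqxx. Qed.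

Theorem theorem4p1 (R : realType) (f : R -> R[i]) (a c : R[i]) (b : R) :
  cLebesgue_measurable f ->
  ((\forall x \ae (@lebesgue_measure R), b < x -> f x = c * expC (a * RtoC x)) \/
   (\forall x \ae (@lebesgue_measure R), x < b -> f x = c * expC (a * RtoC x))) ->
  ~ (\forall x \ae (@lebesgue_measure R), f x = c * expC (a * RtoC x)) ->
  gabor_lin_indep f.
Proof.
move=> _ [H1|H1] H2; first exact: core H1 H2.
pose g x := f (- x).
have H1' : \forall x \ae (@lebesgue_measure R), - b < x -> g x = c * expC (- a * RtoC x).
  apply: (ae_mp (@ae_opp R _ H1)) => x hx bx.
  by rewrite /g hx ?RtoC_N ?mulrN ?mulNr // ltrNl.
have H2' : ~ \forall x \ae (@lebesgue_measure R), g x = c * expC (- a * RtoC x).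
  move=> hg; apply: H2; apply: (ae_mp (@ae_opp R _ hg)) => x.
  by rewrite /g opprK RtoC_N mulrN mulNr opprK.
have Hg := core H1' H2'.
move=> s k us hs HL.
pose ng (p : R * R) := (- p.1, - p.2).
apply: (Hg (map ng s) (fun p => k (ng p))).
- rewrite map_inj_uniq // => [[x1 y1] [x2 y2]] [] /oppr_inj -> /oppr_inj ->.
  by [].
- rewrite has_map; apply: sub_has hs => p /=; by rewrite /ng /= !opprK -surjective_pairing.
- apply: (ae_mp (@ae_opp R _ HL)) => x hx; rewrite -[RHS]hx big_map; apply: eq_bigr => p _.
  rewrite /ng /= !opprK -surjective_pairing /MT /g.
  congr (_ * (expC _ * f _)); last by rewrite opprD opprK.
  by congr Complex; ring.
Qed.
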